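(* Let $q$ be a prime power, $M\geq 2$ an integer, and let $f_1,f_2\in\mathbb{F}_q[x]$ be monic irreducible polynomials (different from $x$) both of degree $n$ and both of exponent $e$. Then for every integer $l\geq 1$, $f_1(x^M)$ has a SRIM factor of degree $2l$ if and only if $f_2(x^M)$ has a SRIM factor of degree $2l$.
   Context: The exponent of a monic irreducible polynomial $f\in\mathbb{F}_q[x]$ with $f(0)\neq0$ is the multiplicative order of any of its roots in its splitting field. For a monic polynomial $f$ of degree $r$ with $f(0)\neq 0$, $f^*(x)=f(0)^{-1}x^rf(x^{-1})$; $f$ is self-reciprocal if $f=f^*$. A SRIM polynomial is a self-reciprocal irreducible monic polynomial. *)

(* Defs.v *)
From HB Require Import structures.
From mathcomp Require Import all_boot all_order all_algebra all_field.
Set Implicit Arguments. Unset Strict Implicit. Unset Printing Implicit Defensive.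
Import GRing.Theory.
Local Open Scope ring_scope.

(* Reciprocal polynomial f^*(x) = f(0)^{-1} x^r f(x^{-1}), r = deg f:
   the coefficient sequence of x^r f(1/x) is the reversed sequence of f. *)
Definition reciprocal (F : fieldType) (f : {poly F}) : {poly F} :=
  (f`_0)^-1 *: Poly (rev f).

Definition self_reciprocal (F : fieldType) (f : {poly F}) : Prop :=
  f`_0 != 0 /\ reciprocal f = f.

Definition SRIM (F : fieldType) (h : {poly F}) : Prop :=
  h \is monic /\ irreducible_poly h /\ self_reciprocal h.

Definition has_SRIM_factor (F : fieldType) (g : {poly F}) (d : nat) : Prop :=
  exists h : {poly F}, [/\ SRIM h, h %| g & (size h).-1 = d].

(* e is the exponent (order) of f: the least positive integer e with
   f | x^e - 1; for irreducible f with f(0) <> 0 this is the multiplicative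
   order of a root of f. *)
Definition poly_exponent (F : fieldType) (f : {poly F}) (e : nat) : Prop :=
  [/\ (0 < e)%N, f %| 'X^e - 1 &
      forall k : nat, (0 < k)%N -> f %| 'X^k - 1 -> (e <= k)%N].

(* Main.v *)
Require Import Defs.
From HB Require Import structures.
From mathcomp Require Import all_boot all_order all_algebra all_field.
From mathcomp Require Import zify.
Import GRing.Theory.
Lemma coprime_lift k e N : coprime k e -> 0 < k -> 0 < N ->
  exists t, coprime (k + e * t) N.
Proof.
move=> cke k0 N0; set t := N`_(\pi(k))^'.
have ctk : coprime t k.
  rewrite coprime_sym; apply: (pnat_coprime (pnat_pi k0)); exact: part_pnat.
exists t; apply/negPn/negP => nc.
have g1 : 1 < gcdn (k + e * t) N.
  by rewrite ltn_neqAle eq_sym nc /= gcdn_gt0 N0 orbT.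
set g := gcdn _ _ in g1.
have pp := pdiv_prime g1; have pg := pdiv_dvd g.
set p := pdiv g in pp pg.
have pk : p %| k + e * t by apply: dvdn_trans pg (dvdn_gcdl _ _).
have pN : p %| N by apply: dvdn_trans pg (dvdn_gcdr _ _).
have [pt | npt] := boolP (p %| t).
  have pkk : p %| k by rewrite (dvdn_addl _ (dvdn_mull e pt)) in pk.
  have : p %| gcdn t k by rewrite dvdn_gcd pt pkk.
  by rewrite (eqP ctk) dvdn1 => /eqP p1; rewrite p1 in pp.
have pNp : p %| N`_(\pi(k)).
  move: pN; rewrite -{1}(partnC (\pi(k)) N0) Euclid_dvdM //.
  by rewrite (negbTE npt) orbF.
have pik : p \in \pi(k).
  by rewrite -(pnatE _ pp); apply: pnat_dvd pNp (part_pnat _ _).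
have pkk : p %| k by move: pik; rewrite mem_primes => /and3P[].
have pe : p %| e.
  move: pk; rewrite (dvdn_addr _ pkk) Euclid_dvdM // (negbTE npt) orbF //.
have : p %| gcdn k e by rewrite dvdn_gcd pkk pe.
by rewrite (eqP cke) dvdn1 => /eqP p1; rewrite p1 in pp.
Qed.

Local Open Scope ring_scope.



Lemma REV (K : fieldType) (s : seq K) (x : K) : x != 0 ->
  (Poly (rev s)).[x] = x ^+ (size s).-1 * (Poly s).[x^-1].
Proof.
move=> x0.
have hs : (size (Poly (rev s)) <= size s)%N by rewrite -(size_rev s) size_Poly.
rewrite (horner_coef_wide _ hs).
rewrite (horner_coef_wide _ (size_Poly s)) mulr_sumr.
rewrite (reindex_inj rev_ord_inj) /=; apply: eq_bigr => i _.
rewrite !coef_Poly nth_rev; last by case: i => /= i; lia.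
idtac.
have -> : (size s - (size s - i.+1).+1 = i)%N by case: i => /= i; lia.
have -> : (size s - i.+1 = (size s).-1 - i)%N by case: i => /= i; lia.
rewrite expfB_cond; last by rewrite (negbTE x0) add0n; case: i => /= i; lia.
by rewrite exprVn mulrCA mulrA.
Qed.

Section Gen.
Variables (F : fieldType) (L : fieldExtType F).
Local Notation "p ^i" := (map_poly (in_alg L) p) (at level 2, format "p ^i").

Lemma polyOver1_map (p : {poly F}) : p^i \is a polyOver 1%VS.
Proof. by apply/polyOver1P; exists p. Qed.

Lemma MP (g : {poly F}) y : g \is monic -> irreducible_poly g -> root g^i y ->
  minPoly 1%AS y = g^i.
Proof.
move=> mg ig ry.
have H := @minPoly_dvdp _ _ 1%AS y _ (polyOver1_map g) ry.
have /polyOver1P[q Dq] := minPolyOver 1%AS y.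
have qg : q %| g by rewrite -(dvdp_map (in_alg L)) -Dq.
have sq : size q != 1%N.
  rewrite -(size_map_poly (in_alg L)) -Dq size_minPoly; apply/eqP => /eqP.
  rewrite eqSS adjoin_degreeE => /eqP d0.
  have : (0 < \dim_(1%AS : {subfield L}) <<1; y>>)%N.
    by rewrite divn_gt0 ?adim_gt0 // dimvS // subv_adjoin.
  by rewrite d0.

case: ig => _ /(_ q sq qg) qg'.
have mq : q \is monic by rewrite -(map_monic (in_alg L)) -Dq monic_minPoly.
by rewrite Dq; move: qg'; rewrite (eqp_monic mq mg) => /eqP->.
Qed.

Lemma root_dvd (p q : {poly F}) y : p %| q -> root p^i y -> root q^i y.
Proof. by move=> /dvdpP[r ->] /rootP py; apply/rootP; rewrite rmorphM hornerM py mulr0. Qed.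

Lemma mp_dvd (g p : {poly F}) y : g \is monic -> irreducible_poly g ->
  root g^i y -> root p^i y -> g %| p.
Proof.
move=> mg ig rg rp; rewrite -(dvdp_map (in_alg L)) -(@MP g y mg ig rg).
exact: minPoly_dvdp (polyOver1_map p) rp.
Qed.

Lemma root_recip (p : {poly F}) (y : L) : y != 0 -> root p^i y ->
  root (reciprocal p)^i y^-1.
Proof.
move=> y0 /rootP py; apply/rootP.
rewrite /reciprocal map_polyZ hornerZ map_Poly map_rev REV ?invr_eq0 // invrK.
have -> : Poly (map (in_alg L) p) = p^i by rewrite -map_Poly polyseqK.
by rewrite py !mulr0.
Qed.

Lemma root_Xn1 n (y : L) : root ('X^n - 1 : {poly F})^i y = (y ^+ n == 1).
Proof. by rewrite rmorphB /= map_polyXn rmorph1 -unity_rootE. Qed.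

Lemma ORD (f : {poly F}) e a : f \is monic -> irreducible_poly f ->
  poly_exponent f e -> root f^i a -> e.-primitive_root a.
Proof.
move=> mf irf [e0 fe emin] ra.
have /eqP ae : a ^+ e == 1 by rewrite -root_Xn1; exact: root_dvd fe ra.
have [m pm me] := prim_order_exists e0 ae.
have am : a ^+ m = 1 := prim_expr_order pm.
have fm : f %| 'X^m - 1 by apply: (@mp_dvd f _ a mf irf ra); rewrite root_Xn1 am.
have em := emin m (prim_order_gt0 pm) fm.
have me' := dvdn_leq e0 me.
by have <- : m = e by apply/eqP; rewrite eqn_leq me' em.
Qed.
End Gen.
Arguments MP {F L g y}.
Arguments polyOver1_map {F L} p.
Arguments root_dvd {F L p q y}.
Arguments mp_dvd {F L g p y}.
Arguments root_recip {F L p y}.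
Arguments ORD {F L f e a}.

Local Notation "p ^i" := (map_poly (in_alg _) p) (at level 2, format "p ^i").

Lemma dir (F : fieldType) M (f1 f2 : {poly F}) e l :
  (0 < M)%N -> f1 \is monic -> irreducible_poly f1 ->
  f2 \is monic -> irreducible_poly f2 ->
  poly_exponent f1 e -> poly_exponent f2 e -> (1 <= l)%N ->
  has_SRIM_factor (f1 \Po 'X^M) (2 * l) -> has_SRIM_factor (f2 \Po 'X^M) (2 * l).
Proof.
move=> M0 mf1 if1 mf2 if2 ex1 ex2 l1 [h [[mh [ih [h0 hrec]]] hdiv hsz]].
have [L _ [c rc _]] := irredp_FAdjoin ih.
have rf1 : root (map_poly (in_alg L) f1) (c ^+ M).
  have := root_dvd hdiv rc.
  by rewrite map_comp_poly /= map_polyXn rootE horner_comp hornerXn.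
set a := c ^+ M in rf1.
have pa := ORD mf1 if1 ex1 rf1.
have e0 := prim_order_gt0 pa.
have f2d : map_poly (in_alg L) f2 %| \prod_(0 <= j < e) ('X - (a ^+ j)%:P).
  rewrite (factor_Xn_sub_1 pa).
  have := ex2; case=> _ fe _; rewrite -(dvdp_map (in_alg L)) in fe.
  by move: fe; rewrite rmorphB /= map_polyXn rmorph1.
case: (dvdp_prod_XsubC f2d) => m.
case Em: (mask m _) => [|j0 js] Dm.
  rewrite big_nil in Dm; have := eqp_size Dm; rewrite size_poly1 size_map_poly.
  by case: if2 => + _ => /[swap] ->.
have rb : root (map_poly (in_alg L) f2) (a ^+ j0).
  by rewrite (eqp_root Dm) big_cons rootM root_XsubC eqxx.
set k := (j0 + e)%N.
have bk : root (map_poly (in_alg L) f2) (a ^+ k).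
  by rewrite exprD (prim_expr_order pa) mulr1.
have pb := ORD mf2 if2 ex2 bk.
have [j Dj] := prim_rootP pb (prim_expr_order pa).
have ckj : coprime k e.
  have := eq_prim_root_expr pa (k * j) 1.
  rewrite exprM -Dj expr1 eqxx => /esym/eqP kj1.
  have : coprime (k * j) e by rewrite -coprime_modl kj1 coprime_modl coprime1n.
  by rewrite coprimeMl => /andP[].
have N0 : (0 < M * e)%N by rewrite muln_gt0 M0 e0.
have k0 : (0 < k)%N by rewrite addn_gt0 e0 orbT.
have [t ct] := @coprime_lift k e (M * e) ckj k0 N0.
set k' := (k + e * t)%N in ct.
set d := c ^+ k'.
have cN : c ^+ (M * e) = 1 by rewrite exprM (prim_expr_order pa).
have c0 : c != 0.
  by apply/eqP => c0; move: cN; rewrite c0 expr0n muln_eq0 (gtn_eqF M0) (gtn_eqF e0) => /eqP; rewrite eq_sym oner_eq0.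
have d0 : d != 0 by rewrite expf_neq0.
have dM : d ^+ M = a ^+ k.
  by rewrite -exprM mulnC exprM -/a exprD exprM (prim_expr_order pa) expr1n mulr1.
have cd : c = d ^+ (k' ^ (totient (M * e)).-1).
  rewrite -exprM -expnS prednK ?totient_gt0 //.
  by rewrite -(expr_mod _ cN) (cyclic.Euler_exp_totient ct) (expr_mod _ cN) expr1.
have /polyOver1P[g Dg] := minPolyOver 1%AS d.
have rg : root g^i d by rewrite -Dg root_minPoly.
have mg : g \is monic by rewrite -(map_monic (in_alg L)) -Dg monic_minPoly.
have Ecd : <<1%AS; d>>%VS = <<1%AS; c>>%VS.
  apply/eqP; rewrite eqEsubv; apply/andP; split; apply/FadjoinP; split.
  - exact: subv_adjoin.
  - by rewrite rpredX // memv_adjoin.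
  - exact: subv_adjoin.
  - by rewrite {1}cd rpredX // memv_adjoin.
have szg : size g = size h.
  rewrite -(size_map_poly (in_alg L) g) -(size_map_poly (in_alg L) h) -Dg.
  rewrite -(MP mh ih rc) !size_minPoly !adjoin_degreeE Ecd //.
have sh1 : (1 < size h)%N by case: ih.
have ig : irreducible_poly g.
  split; first by rewrite szg.
  move=> q sq qg.
  have qm : q^i %| minPoly 1%AS d by rewrite Dg dvdp_map.
  have [qe|q1] := orP (@minPoly_irr _ _ 1%AS d _ (polyOver1_map q) qm).
    by rewrite -(eqp_map (in_alg L)) -Dg.
  by move: q1 => /eqp_size; rewrite size_poly1 size_map_poly => q1; rewrite q1 in sq.
have gdiv : g %| f2 \Po 'X^M.
  apply: (mp_dvd mg ig rg).
  by rewrite map_comp_poly /= map_polyXn rootE horner_comp hornerXn dM.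
have g0 : g`_0 != 0.
  apply/negP => /eqP g0.
  have : ('X - 0%:P) %| g by rewrite dvdp_XsubCl rootE horner_coef0 g0.
  rewrite subr0 => Xg.
  case: ig => _ /(_ 'X); rewrite size_polyX => /(_ isT Xg) /eqp_size.
  rewrite size_polyX szg => sh2.
  by move: hsz; rewrite -sh2 /=; case: l l1 => // l' _; rewrite mulnS.
have rgi : root g^i d^-1.
  have rR : root (g \Po 'X^k')^i c.
    by rewrite map_comp_poly /= map_polyXn rootE horner_comp hornerXn.
  have hR := mp_dvd mh ih rc rR.
  have rhi : root h^i c^-1 by rewrite -{1}hrec; exact: root_recip c0 rc.
  have := root_dvd hR rhi.
  by rewrite map_comp_poly /= map_polyXn rootE horner_comp hornerXn exprVn.
have rr := root_recip d0 rg.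
have gr : g %| reciprocal g by exact: mp_dvd mg ig rgi rr.
have szr : (size (reciprocal g) <= size g)%N.
  rewrite /reciprocal (leq_trans (size_scale_leq _ _)) // (leq_trans (size_Poly _)) //.
  by rewrite size_rev.
have sg0 : (0 < size g)%N by rewrite szg ltnW.
have cr : (reciprocal g)`_(size g).-1 = 1.
  rewrite /reciprocal coefZ coef_Poly nth_rev ?prednK //.
  by rewrite subnn mulVf.
have r0 : reciprocal g != 0 by apply/eqP => r0; move: cr; rewrite r0 coef0 => /eqP; rewrite eq_sym oner_eq0.
have szr' : size (reciprocal g) = size g.
  by apply/eqP; rewrite eqn_leq szr dvdp_leq.
have mr : reciprocal g \is monic.
  by rewrite monicE /lead_coef szr' cr.
have Er : reciprocal g = g.
  have : g %= reciprocal g by rewrite -dvdp_size_eqp // szr'.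
  by rewrite (eqp_monic mg mr) => /eqP E; rewrite -E.
exists g; split => //; last by rewrite szg.
Qed.


Theorem lemma4p17 (F : finFieldType) (M : nat) (f1 f2 : {poly F}) (n e : nat) :
  (2 <= M)%N ->
  f1 \is monic -> irreducible_poly f1 -> f1 != 'X ->
  f2 \is monic -> irreducible_poly f2 -> f2 != 'X ->
  (size f1).-1 = n -> (size f2).-1 = n ->
  poly_exponent f1 e -> poly_exponent f2 e ->
  forall l : nat, (1 <= l)%N ->
    (has_SRIM_factor (f1 \Po 'X^M) (2 * l) <->
     has_SRIM_factor (f2 \Po 'X^M) (2 * l)).
Proof.
move=> M2 m1 i1 _ m2 i2 _ _ _ e1 e2 l l1.
have M0 : (0 < M)%N by apply: leq_trans M2.
split; [exact: (@dir F M f1 f2 e l M0 m1 i1 m2 i2 e1 e2 l1) | exact: (@dir F M f2 f1 e l M0 m2 i2 m1 i1 e2 e1 l1)].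
Qed.
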